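(* For every $h\ge1$, the reduction map $r_\ell:\mathrm{Irr}(T_h,\overline{\mathbb Q}_\ell)\to\mathrm{Irr}(T_h,\overline{\mathbb F}_\ell)$ is a $\mathrm{Gal}(L/K)$-equivariant surjection all of whose fibers have exactly $\ell^m$ elements, where $m=v_\ell(q^n-1)$.
   Context: $K$ is a non-archimedean local field with residue field $\mathbb F_q$ of characteristic $p$; $L/K$ is the unramified extension of degree $n$, with ring of integers $\mathcal O_L$ and maximal ideal $\mathfrak p_L$; $\ell\ne p$ prime. $T_h=\mathcal O_L^\times/(1+\mathfrak p_L^h)$, a finite abelian group with $\mathrm{Gal}(L/K)$-action. $\mathrm{Irr}(T_h,\Lambda)$ is the set of characters $T_h\to\Lambda^\times$, with $\mathrm{Gal}(L/K)$ acting by precomposition; $r_\ell$ postcomposes a character (with values in roots of unity of $\overline{\mathbb Z}_\ell$) with $\overline{\mathbb Z}_\ell\to\overline{\mathbb F}_\ell$. *)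

(* Defs.v *)
From HB Require Import structures.
From mathcomp Require Import all_boot all_order all_algebra all_field.
Set Implicit Arguments. Unset Strict Implicit. Unset Printing Implicit Defensive.
Import Order.TTheory GRing.Theory Num.Theory.
Local Open Scope ring_scope.

(* Normalized discrete valuation on a field F (value at 0 is irrelevant). *)
Definition is_discrete_valuation (F : fieldType) (v : F -> int) : Prop :=
  [/\ forall x y : F, x != 0 -> y != 0 -> v (x * y) = v x + v y,
      forall x y : F, x != 0 -> y != 0 -> x + y != 0 ->
        (v x <= v (x + y)) || (v y <= v (x + y))
    & forall z : int, exists2 x : F, x != 0 & v x = z].

(* vpow v k = the fractional ideal p^k = {x | x = 0 or v x >= k};
   vpow v 0 is the valuation ring O, vpow v 1 its maximal ideal p. *)
Definition vpow (F : fieldType) (v : F -> int) (k : int) (x : F) : bool :=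
  (x == 0) || (k <= v x).

Definition vunit (F : fieldType) (v : F -> int) (x : F) : bool :=
  (x != 0) && (v x == 0).

Definition v_complete (F : fieldType) (v : F -> int) : Prop :=
  forall u : nat -> F,
    (forall N : int, exists M : nat, forall i j : nat,
        (M <= i)%N -> (M <= j)%N -> vpow v N (u i - u j)) ->
    exists l : F, forall N : int, exists M : nat, forall i : nat,
        (M <= i)%N -> vpow v N (u i - l).

Definition residue_card (F : fieldType) (v : F -> int) (k : nat) : Prop :=
  exists s : seq F,
    [/\ size s = k, all (vpow v 0) s,
        forall i j : nat, (i < k)%N -> (j < k)%N ->
          vpow v 1 (nth 0 s i - nth 0 s j) -> i = j
      & forall x : F, vpow v 0 x ->
          exists2 i : nat, (i < k)%N & vpow v 1 (x - nth 0 s i)].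

(* A character of T_h = O_L^x / (1 + p_L^h) with values in Lam, represented
   as a function on L that is multiplicative on O_L^x and trivial on
   1 + p_L^h; two such functions define the same character of T_h iff
   they agree on O_L^x.  (Values are automatically in Lam^x.) *)
Definition Th_char (L : fieldType) (vL : L -> int) (h : nat)
    (Lam : fieldType) (chi : L -> Lam) : Prop :=
  (forall x y : L, vunit vL x -> vunit vL y -> chi (x * y) = chi x * chi y) /\
  (forall x : L, vunit vL x -> vpow vL (h%:Z) (x - 1) -> chi x = 1).

(* An element of Gal(L/K): a K-algebra (ring) endomorphism of L
   (automatically an automorphism since [L:K] is finite). *)
Definition gal_elt (K : fieldType) (L : fieldExtType K) (s : L -> L) : Prop :=
  [/\ forall x y : L, s (x + y) = s x + s y,
      forall x y : L, s (x * y) = s x * s y,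
      s 1 = 1
    & forall c : K, s (c%:A) = c%:A].

Definition valuation_ring (Lam : fieldType) (O : Lam -> bool) : Prop :=
  [/\ O 1,
      forall x y, O x -> O y -> O (x - y),
      forall x y, O x -> O y -> O (x * y)
    & forall x, x != 0 -> O x || O (x^-1)].

(* red : O -> Lam1 is a ring morphism from the valuation ring O of Lam0
   whose kernel is the maximal ideal of O (abstracting Zbar_l -> Fbar_l). *)
Definition reduction_map (Lam0 Lam1 : fieldType) (O : Lam0 -> bool)
    (red : Lam0 -> Lam1) : Prop :=
  [/\ valuation_ring O,
      red 1 = 1,
      forall x y, O x -> O y -> red (x + y) = red x + red y,
      forall x y, O x -> O y -> red (x * y) = red x * red y
    & forall x, O x -> (red x == 0) = ((x == 0) || ~~ O (x^-1))].

(* Main.v *)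
Require Import Defs.
From HB Require Import structures.
From mathcomp Require Import all_boot all_order all_algebra all_field all_fingroup all_solvable.
From mathcomp Require Import zify.
Set Implicit Arguments. Unset Strict Implicit. Unset Printing Implicit Defensive.
Import Order.TTheory GRing.Theory Num.Theory.
Local Open Scope ring_scope.


Section Val.
Variables (L : fieldType) (v : L -> int).
Hypothesis Hv : is_discrete_valuation v.

Let vM x y : x != 0 -> y != 0 -> v (x * y) = v x + v y.
Proof. by case: Hv => H1 H2 _; first [apply: H1 | apply: H2]. Qed.
Let vD x y : x != 0 -> y != 0 -> x + y != 0 ->
        (v x <= v (x + y)) || (v y <= v (x + y)).
Proof. by case: Hv => H1 H2 _; first [apply: H1 | apply: H2]. Qed.

Lemma v1 : v 1 = 0.
Proof. have := vM (oner_neq0 L) (oner_neq0 L); rewrite mulr1 => h; by apply: (addrI (v 1)); rewrite addr0 -h. Qed.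

Lemma vN1 : v (-1) = 0.
Proof.
have h : (-1 : L) != 0 by rewrite oppr_eq0 oner_neq0.
have := vM h h; rewrite mulrNN mulr1 v1; lia.
Qed.

Lemma vNx x : x != 0 -> v (- x) = v x.
Proof.
move=> x0; have h : (-1 : L) != 0 by rewrite oppr_eq0 oner_neq0.
by rewrite -mulN1r vM // vN1 add0r.
Qed.

Lemma vV x : x != 0 -> v (x^-1) = - v x.
Proof.
move=> x0; have := vM x0 (invr_neq0 x0); rewrite mulfV // v1; lia.
Qed.

Lemma vpow0 k : vpow v k 0.
Proof. by rewrite /vpow eqxx. Qed.

Lemma vpowD k x y : vpow v k x -> vpow v k y -> vpow v k (x + y).
Proof.
move=> hx hy; have [->|x0] := eqVneq x 0; first by rewrite add0r.
have [->|y0] := eqVneq y 0; first by rewrite addr0.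
rewrite /vpow in hx hy *; rewrite (negPf x0) (negPf y0) /= in hx hy.
have [->|s0] := eqVneq (x + y) 0; first by [].
rewrite /=.
by case/orP: (vD x0 y0 s0) => h; [apply: le_trans hx h | apply: le_trans hy h].
Qed.

Lemma vpowN k x : vpow v k x -> vpow v k (- x).
Proof.
rewrite /vpow oppr_eq0; case: eqP => //= /eqP x0.
by rewrite vNx.
Qed.

Lemma vpowB k x y : vpow v k x -> vpow v k y -> vpow v k (x - y).
Proof. by move=> hx hy; apply: vpowD => //; apply: vpowN. Qed.

Lemma vpowM a b x y : vpow v a x -> vpow v b y -> vpow v (a + b) (x * y).
Proof.
rewrite /vpow mulf_eq0; case: eqP => //= /eqP x0; case: eqP => //= /eqP y0.
rewrite vM // => ha hb; exact: lerD.
Qed.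

Lemma vpowW a b x : a <= b -> vpow v b x -> vpow v a x.
Proof. by rewrite /vpow => ab /orP[->//|h]; rewrite (le_trans ab h) orbT. Qed.

Lemma vpow1 : vpow v 0 1.
Proof. by rewrite /vpow v1 lexx orbT. Qed.

Lemma vpow_nat k : vpow v 0 (k%:R).
Proof.
elim: k => [|k IH]; first by rewrite vpow0.
by rewrite -addn1 natrD; apply: vpowD => //; apply: vpow1.
Qed.



Lemma vpowM0 a x y : vpow v 0 x -> vpow v a y -> vpow v a (x * y).
Proof. by move=> hx hy; have := vpowM hx hy; rewrite add0r. Qed.

Lemma vpowX0 x k : vpow v 0 x -> vpow v 0 (x ^+ k).
Proof.
move=> hx; elim: k => [|k IH]; first by rewrite expr0 vpow1.
by rewrite exprS; apply: vpowM0.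
Qed.

Lemma vunit1 : vunit v 1.
Proof. by rewrite /vunit oner_neq0 v1 eqxx. Qed.

Lemma vunitM x y : vunit v x -> vunit v y -> vunit v (x * y).
Proof.
rewrite /vunit => /andP[x0 /eqP vx] /andP[y0 /eqP vy].
by rewrite mulf_neq0 // vM // vx vy addr0 eqxx.
Qed.

Lemma vunitV x : vunit v x -> vunit v (x^-1).
Proof.
rewrite /vunit => /andP[x0 /eqP vx].
by rewrite invr_neq0 // vV // vx oppr0 eqxx.
Qed.

Lemma vunitX x k : vunit v x -> vunit v (x ^+ k).
Proof.
move=> hx; elim: k => [|k IH]; first by rewrite expr0 vunit1.
by rewrite exprS vunitM.
Qed.

Lemma vunit_neq0 x : vunit v x -> x != 0.
Proof. by case/andP. Qed.

Lemma vunitO x : vunit v x -> vpow v 0 x.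
Proof. by case/andP => _ /eqP h; rewrite /vpow h lexx orbT. Qed.

Lemma vpow_unitM k x y : vunit v x -> vpow v k (x * y) = vpow v k y.
Proof.
rewrite /vpow /vunit => /andP[x0 /eqP vx]; rewrite mulf_eq0 (negPf x0) /=.
by case: eqP => // /eqP y0; rewrite vM // vx add0r.
Qed.

Lemma vunitE x : vunit v x = vpow v 0 x && ~~ vpow v 1 x.
Proof.
rewrite /vunit /vpow; case: eqP => //= /eqP x0.
by rewrite -ltNge; apply/eqP/idP => [->//|h]; lia.
Qed.

End Val.


Section Res.
Variables (L : fieldType) (v : L -> int).
Hypothesis Hv : is_discrete_valuation v.
Variables (Q : nat) (s : seq L).
Hypothesis Hsz : size s = Q.
Hypothesis Hall : all (vpow v 0) s.
Hypothesis Hdist : forall i j : nat, (i < Q)%N -> (j < Q)%N ->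
          vpow v 1 (nth 0 s i - nth 0 s j) -> i = j.
Hypothesis Hcov : forall x : L, vpow v 0 x ->
          exists2 i : nat, (i < Q)%N & vpow v 1 (x - nth 0 s i).

Local Notation O := (vpow v 0).
Local Notation cg x y := (vpow v 1 (x - y)).

Lemma Q_gt0 : (0 < Q)%N.
Proof. by case: (Hcov (vpow0 v 0)) => i hi _; apply: leq_ltn_trans hi. Qed.

Definition resrep (i : 'I_Q) : L := nth 0 s i.
Definition i0 : 'I_Q := Ordinal Q_gt0.
Definition resproj (x : L) : 'I_Q := odflt i0 [pick i : 'I_Q | cg x (resrep i)].

Lemma repO i : O (resrep i).
Proof. by apply: (allP Hall); apply: mem_nth; rewrite Hsz. Qed.

Lemma cg_refl x : cg x x.
Proof. by rewrite subrr vpow0. Qed.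
Lemma cg_sym x y : cg x y -> cg y x.
Proof. by move/(vpowN Hv); rewrite opprB. Qed.
Lemma cg_trans y x z : cg x y -> cg y z -> cg x z.
Proof.
by move=> h1 h2; have := vpowD Hv h1 h2; rewrite addrA subrK.
Qed.

Lemma proj_spec x : O x -> cg x (resrep (resproj x)).
Proof.
move=> hx; rewrite /resproj; case: pickP => [i //|none].
case: (Hcov hx) => i hi hxi.
by have := none (Ordinal hi); rewrite /resrep /= hxi.
Qed.

Lemma rep_inj i j : cg (resrep i) (resrep j) -> i = j.
Proof. by move=> h; apply: val_inj; apply: Hdist => //; apply: ltn_ord. Qed.

Lemma proj_cg x y : O x -> O y -> cg x y -> resproj x = resproj y.
Proof.
move=> hx hy hxy; apply: rep_inj.
apply: (cg_trans (y := x)); first exact: cg_sym (proj_spec hx).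
apply: cg_trans hxy _; exact: proj_spec.
Qed.

Lemma proj_rep i : resproj (resrep i) = i.
Proof. by apply: rep_inj; apply: cg_sym; apply: proj_spec; apply: repO. Qed.

Lemma cg_proj x y : O x -> O y -> resproj x = resproj y -> cg x y.
Proof.
move=> hx hy e; apply: (cg_trans (y := resrep (resproj x))); first exact: proj_spec.
by rewrite e; apply: cg_sym; apply: proj_spec.
Qed.

Lemma cgD x x' y y' : cg x x' -> cg y y' -> cg (x + y) (x' + y').
Proof.
move=> h1 h2; have := vpowD Hv h1 h2.
by rewrite opprD addrACA.
Qed.

Lemma cgN x x' : cg x x' -> cg (- x) (- x').
Proof. by move/(vpowN Hv); rewrite opprB opprK addrC. Qed.

Lemma cgM x x' y y' : O x' -> O y -> cg x x' -> cg y y' -> cg (x * y) (x' * y').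
Proof.
move=> hx' hy h1 h2.
have e : x * y - x' * y' = (x - x') * y + x' * (y - y').
  by rewrite mulrBl mulrBr addrA subrK.
rewrite e; apply: (vpowD Hv).
  by have := vpowM Hv h1 hy; rewrite addr0.
by have := vpowM Hv hx' h2; rewrite add0r.
Qed.

Lemma OD x y : O x -> O y -> O (x + y). Proof. exact: vpowD. Qed.
Lemma ON x : O x -> O (- x). Proof. exact: vpowN. Qed.
Lemma OM x y : O x -> O y -> O (x * y).
Proof. by move=> hx hy; have := vpowM Hv hx hy; rewrite addr0. Qed.

Definition T := 'I_Q.
HB.instance Definition _ := Finite.copy T 'I_Q.

Definition rzero : T := resproj 0.
Definition rone : T := resproj 1.
Definition radd (i j : T) : T := resproj (resrep i + resrep j).
Definition ropp (i : T) : T := resproj (- resrep i).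
Definition rmul (i j : T) : T := resproj (resrep i * resrep j).
Definition rinv (i : T) : T := if cg (resrep i) 0 then i else resproj ((resrep i)^-1).

Lemma raddE x y : O x -> O y -> radd (resproj x) (resproj y) = resproj (x + y).
Proof.
move=> hx hy; apply: proj_cg; [apply: OD; exact: repO|exact: OD|].
by apply: cgD; apply: cg_sym; apply: proj_spec.
Qed.

Lemma roppE x : O x -> ropp (resproj x) = resproj (- x).
Proof.
move=> hx; apply: proj_cg; [apply: ON; exact: repO|exact: ON|].
by apply: cgN; apply: cg_sym; apply: proj_spec.
Qed.

Lemma rmulE x y : O x -> O y -> rmul (resproj x) (resproj y) = resproj (x * y).
Proof.
move=> hx hy; apply: proj_cg; [apply: OM; exact: repO|exact: OM|].
by apply: cgM => //; [exact: repO | apply: cg_sym; apply: proj_spec..].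
Qed.

Lemma Ozero : O 0. Proof. exact: vpow0. Qed.
Lemma Oone : O 1. Proof. exact: vpow1. Qed.
Ltac oo := repeat (first [exact: repO | exact: Ozero | exact: Oone | apply: OD | apply: OM | apply: ON]).

Lemma raddA : associative radd.
Proof.
move=> i j k; rewrite -[i]proj_rep -[j]proj_rep -[k]proj_rep.
by rewrite !raddE ?addrA //; oo.
Qed.

Lemma raddC : commutative radd.
Proof. by move=> i j; rewrite /radd addrC. Qed.

Lemma radd0 : left_id rzero radd.
Proof. by move=> i; rewrite -[i]proj_rep raddE ?Ozero ?repO // add0r. Qed.

Lemma raddN : left_inverse rzero ropp radd.
Proof.
move=> i; rewrite -[i]proj_rep roppE ?repO // raddE ?addNr //.
  by apply: ON; exact: repO.
exact: repO.
Qed.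

HB.instance Definition _ := GRing.isZmodule.Build T raddA raddC radd0 raddN.

Lemma rmulA : associative rmul.
Proof.
move=> i j k; rewrite -[i]proj_rep -[j]proj_rep -[k]proj_rep.
by rewrite !rmulE ?mulrA ?repO //; apply: OM; exact: repO.
Qed.

Lemma rmulC : commutative rmul.
Proof. by move=> i j; rewrite /rmul mulrC. Qed.

Lemma rmul1 : left_id rone rmul.
Proof. by move=> i; rewrite -[i]proj_rep rmulE ?Oone ?repO // mul1r. Qed.

Lemma rmulD : left_distributive rmul radd.
Proof.
move=> i j k; rewrite -[i]proj_rep -[j]proj_rep -[k]proj_rep.
rewrite raddE ?repO // rmulE ?repO ?OD ?repO // !rmulE ?repO //.
by rewrite raddE ?mulrDl // OM ?repO.
Qed.

Lemma cg10 : ~~ cg (1 : L) 0.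
Proof. by rewrite subr0 /vpow oner_eq0 /= (v1 Hv). Qed.

Lemma rone_neq0 : rone != rzero.
Proof.
apply/eqP => /cg_proj h; have := h Oone Ozero; by rewrite (negPf cg10).
Qed.

HB.instance Definition _ := GRing.Zmodule_isComNzRing.Build T rmulA rmulC rmul1 rmulD rone_neq0.

Lemma rmulVf (x : T) : x != 0 -> rmul (rinv x) x = 1.
Proof.
move=> x0; rewrite /rinv; case: ifP => h.
  case/eqP: x0; rewrite -[x]proj_rep; apply: proj_cg => //; [exact: repO|exact: Ozero].
have u : vunit v (resrep x) by rewrite vunitE repO /= -(subr0 (resrep x)) h.
rewrite -[x in rmul _ x]proj_rep rmulE ?mulVf ?(vunit_neq0 u) //.
  exact: vunitO (vunitV Hv u).
exact: repO.
Qed.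

Lemma rinv0 : rinv 0 = 0.
Proof.
rewrite /rinv; case: ifP => // h; case/negP: h.
by apply: cg_sym; apply: proj_spec; exact: Ozero.
Qed.

HB.instance Definition _ := GRing.ComNzRing_isField.Build T rmulVf rinv0.

Lemma projM x y : O x -> O y -> resproj (x * y) = (resproj x : T) * resproj y.
Proof. by move=> hx hy; rewrite -rmulE. Qed.

Lemma proj_one : resproj 1 = (1 : T). Proof. by []. Qed.

Lemma projX x k : O x -> resproj (x ^+ k) = (resproj x : T) ^+ k.
Proof.
move=> hx; elim: k => [|k IH]; first by rewrite !expr0.
by rewrite !exprS projM ?IH // (vpowX0 Hv).
Qed.

Lemma proj_eq0 x : O x -> ((resproj x : T) == 0) = cg x 0.
Proof.
move=> hx; apply/eqP/idP => [h|h]; first by apply: cg_proj => //; exact: Ozero.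
by apply: proj_cg => //; exact: Ozero.
Qed.

Lemma cardT : #|{: T}| = Q.
Proof. by rewrite card_ord. Qed.


Lemma res_gen : (1 < Q)%N /\ (forall x, vunit v x -> cg (x ^+ Q.-1) 1) /\ exists g : L,
  [/\ vunit v g, cg (g ^+ Q.-1) 1,
      forall k, cg (g ^+ k) 1 -> (Q.-1 %| k)%N
    & forall x, vunit v x -> exists k : 'I_Q.-1, cg x (g ^+ k)].
Proof.
have Q1 : (1 < Q)%N.
  rewrite -cardT; apply: (@leq_trans #|[set (0:T); 1]|).
    by rewrite cards2 eq_sym oner_neq0.
  exact: max_card.
have Qe : Q = Q.-1.+1 by rewrite prednK // ltnW.
pose rs := [seq x <- enum T | x != 0].
have rs_all : all (Q.-1).-unity_root rs.
  apply/allP => x; rewrite mem_filter => /andP[x0 _].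
  rewrite unity_rootE; have := expf_card x; rewrite cardT {1}Qe exprSr => h.
  by apply/eqP; apply: (mulIf x0); rewrite h mul1r.
have rs_uniq : uniq rs by rewrite filter_uniq // enum_uniq.
have rs_size : (Q.-1 <= size rs)%N.
  have -> : size rs = #|predC1 (0:T)| by rewrite cardE /rs enumT.
  by rewrite cardC1 cardT.
have := has_prim_root _ rs_all rs_uniq rs_size.
case/(_ _)/hasP => [|u _ pu]; first by rewrite -ltnS -Qe.
have Qp : (0 < Q.-1)%N by rewrite -ltnS -Qe.
have u0 : u != 0.
  apply/eqP => u0; have := prim_expr_order pu; rewrite u0 expr0n.
  by case: (Q.-1) Qp => // ? _ /eqP; rewrite eq_sym oner_eq0.
have Ug : vunit v (resrep u).
  rewrite vunitE repO /= -(subr0 (resrep u)) -proj_eq0 ?repO //.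
  by rewrite proj_rep.
have pg k : resproj (resrep u ^+ k) = u ^+ k by rewrite projX ?repO // proj_rep.
have Ogk k : O (resrep u ^+ k) by apply: (vpowX0 Hv); exact: repO.
split => //; split.
  move=> x Ux; have Ox := vunitO Ux.
  have px0 : (resproj x : T) != 0.
    by rewrite proj_eq0 // subr0; move: Ux; rewrite vunitE => /andP[].
  have : (resproj x : T) ^+ Q.-1 = 1.
    by apply/eqP; rewrite -unity_rootE (allP rs_all) // mem_filter px0 mem_enum.
  move=> e; apply: cg_proj; [exact: (vpowX0 Hv) | exact: Oone |].
  by rewrite projX // e.
exists (resrep u); split => //.
- apply: cg_proj; [exact: Ogk | exact: Oone |].
  by rewrite (pg Q.-1) prim_expr_order.
- move=> k h; rewrite (prim_order_dvd pu) -(pg k); apply/eqP.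
  by apply: proj_cg => //; first [exact: Ogk | exact: Oone].
- move=> x Ux; have Ox := vunitO Ux.
  have px0 : (resproj x : T) != 0.
    by rewrite proj_eq0 // subr0; move: Ux; rewrite vunitE => /andP[].
  have : (resproj x : T) ^+ Q.-1 = 1.
    by apply/eqP; rewrite -unity_rootE (allP rs_all) // mem_filter px0 mem_enum.
  case/(prim_rootP pu) => i hi; exists i.
  apply: cg_proj => //; last by rewrite (pg i).
Qed.

End Res.


Section Binom.
Variables (L : fieldType) (v : L -> int).
Hypothesis Hv : is_discrete_valuation v.
Variable p : nat.
Hypothesis pp : prime p.
Hypothesis Hp : vpow v 1 (p%:R : L).

Lemma vpowXS (a : int) y k : 0 <= a -> vpow v a y -> vpow v a (y ^+ k.+1).
Proof.
move=> a0 hy; rewrite exprS; apply: (vpowW (b := a + 0)); first by rewrite addr0.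
apply: (vpowM Hv) => //; apply: (vpowX0 Hv); exact: vpowW hy.
Qed.

Lemma binom_step (i : nat) y : (0 < i)%N -> vpow v i%:Z y ->
  vpow v (i.+1)%:Z ((1 + y) ^+ p - 1).
Proof.
move=> i0 hy; rewrite [1 + y]addrC exprD1n big_ord_recl /= expr0 bin0 mulr1n.
rewrite addrAC subrr add0r.
apply: (big_ind (vpow v (i.+1)%:Z)) => [|a b|j _]; [exact: vpow0 | exact: (vpowD Hv)|].
rewrite /bump /= add1n.
have [jp|jp] := ltnP j.+1 p.
  have hb : (0 < j.+1 < p)%N by rewrite jp.
  have /dvdnP[c ->] := prime_dvd_bin pp hb.
  rewrite -mulr_natr natrM.
  apply: (vpowW (b := i%:Z + (0 + 1))); first lia.
  apply: (vpowM Hv); first by apply: vpowXS => //; lia.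
  by apply: (vpowM Hv) => //; apply: vpow_nat.
have ej : j.+1 = p by apply/eqP; rewrite eqn_leq jp ltn_ord.
rewrite ej binn mulr1n.
have p2 := prime_gt1 pp.
have -> : p = (p.-2).+2 by lia.
rewrite exprS; apply: (vpowW (b := i%:Z + i%:Z)); first lia.
by apply: (vpowM Hv) => //; apply: vpowXS => //; lia.
Qed.

Lemma binom_iter x j : vpow v 1 (x - 1) -> vpow v (j.+1)%:Z (x ^+ (p ^ j) - 1).
Proof.
move=> hx; elim: j => [|j IH]; first by rewrite expn0 expr1.
rewrite expnSr exprM.
have -> : x ^+ (p ^ j)%N = 1 + (x ^+ (p ^ j)%N - 1) by rewrite addrC subrK.
exact: binom_step.
Qed.

End Binom.


Lemma root_gcd (R : idomainType) (y : R) a b :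
  (0 < a)%N -> y ^+ a = 1 -> y ^+ b = 1 -> y ^+ (gcdn a b) = 1.
Proof.
move=> a0 ya yb; have [d pd da] := prim_order_exists a0 ya.
apply/eqP; rewrite -(prim_order_dvd pd) dvdn_gcd da /=.
by rewrite (prim_order_dvd pd) yb.
Qed.

Lemma root_coprime (R : idomainType) (y : R) a b :
  coprime a b -> (0 < a)%N -> y ^+ a = 1 -> y ^+ b = 1 -> y = 1.
Proof.
move=> cab a0 ya yb; have := root_gcd a0 ya yb.
by move: cab; rewrite /coprime => /eqP ->; rewrite expr1.
Qed.

Lemma closed_prim_root (F : closedFieldType) n :
  (0 < n)%N -> n%:R != 0 :> F -> exists z : F, n.-primitive_root z.
Proof.
move=> n_gt0 nF.
pose p : {poly F} := 'X^n - 1; have [r Dp] := closed_field_poly_normal p.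
rewrite (monicP _) ?monicXnsubC // scale1r in Dp.
have rn1: all n.-unity_root r by apply/allP=> z; rewrite -root_prod_XsubC -Dp.
have sz_r: (n < (size r).+1)%N.
  by rewrite -(size_prod_XsubC r id) -Dp size_XnsubC.
have [|z] := hasP (has_prim_root n_gt0 rn1 _ sz_r); last by exists z.
by rewrite -separable_prod_XsubC -Dp separable_Xn_sub_1.
Qed.

Lemma frob_root1 (R : idomainType) ell (y : R) k :
  ell \in [pchar R] -> y ^+ (ell ^ k) = 1 -> y = 1.
Proof.
move=> ch; elim: k y => [|k IH] y; first by rewrite expn0 expr1.
rewrite expnS exprM => /IH h.
have := pFrobenius_autB_comm ch (commr1 y).
rewrite !pFrobenius_autE h expr1n subrr => /eqP.
by rewrite expf_eq0 subr_eq0 => /andP[_ /eqP].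
Qed.

Section Red.
Variables (Lam0 Lam1 : fieldType) (O0 : Lam0 -> bool) (red : Lam0 -> Lam1).
Hypothesis Hred : reduction_map O0 red.
Variable ell : nat.
Hypothesis ch1 : ell \in [pchar Lam1].

Let VR : valuation_ring O0. Proof. by case: Hred. Qed.
Lemma O0_1 : O0 1. Proof. by case: VR. Qed.
Lemma O0_B x y : O0 x -> O0 y -> O0 (x - y). Proof. by case: VR => _ h _ _; apply: h. Qed.
Lemma O0_M x y : O0 x -> O0 y -> O0 (x * y). Proof. by case: VR => _ _ h _; apply: h. Qed.
Lemma O0_0 : O0 0. Proof. by rewrite -(subrr 1); apply: O0_B; apply: O0_1. Qed.
Lemma O0_N x : O0 x -> O0 (- x). Proof. by move=> h; rewrite -sub0r; apply: O0_B => //; apply: O0_0. Qed.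
Lemma O0_D x y : O0 x -> O0 y -> O0 (x + y).
Proof. by move=> hx hy; rewrite -[y]opprK; apply: O0_B => //; apply: O0_N. Qed.
Lemma O0_X x k : O0 x -> O0 (x ^+ k).
Proof.
move=> hx; elim: k => [|k IH]; first by rewrite expr0 O0_1.
by rewrite exprS O0_M.
Qed.

Lemma red1 : red 1 = 1. Proof. by case: Hred. Qed.
Lemma redD x y : O0 x -> O0 y -> red (x + y) = red x + red y.
Proof. by case: Hred => _ _ h _ _; apply: h. Qed.
Lemma redM x y : O0 x -> O0 y -> red (x * y) = red x * red y.
Proof. by case: Hred => _ _ _ h _; apply: h. Qed.
Lemma red0 : red 0 = 0.
Proof. by case: Hred => _ _ _ _ h; apply/eqP; rewrite h ?eqxx // O0_0. Qed.
Lemma redX x k : O0 x -> red (x ^+ k) = red x ^+ k.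
Proof.
move=> hx; elim: k => [|k IH]; first by rewrite !expr0 red1.
by rewrite !exprS redM ?IH // O0_X.
Qed.

Lemma rootO x N : (0 < N)%N -> x ^+ N = 1 -> O0 x.
Proof.
move=> N0 xN; have x0 : x != 0.
  by apply/eqP => x0; move: xN; rewrite x0 expr0n; case: N N0 => // N _ /eqP; rewrite eq_sym oner_eq0.
case: VR => _ _ _ /(_ x x0) /orP[//|hi].
have e1 : x ^+ N.-1 = x^-1.
  by apply: (mulfI x0); rewrite mulfV // -exprS prednK.
have e : x = x^-1 ^+ N.-1 by rewrite exprVn e1 invrK.
by rewrite e O0_X.
Qed.

Lemma red_sum N (F : nat -> Lam0) : (forall i, O0 (F i)) ->
  red (\sum_(i < N) F i) = \sum_(i < N) red (F i).
Proof.
move=> hF; elim: N => [|N IH]; first by rewrite !big_ord0 red0.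
have hs : forall M, O0 (\sum_(i < M) F i).
  by elim=> [|M IHM]; rewrite ?big_ord0 ?O0_0 // big_ord_recr O0_D.
by rewrite !big_ord_recr redD // IH.
Qed.

Lemma red_root1 x N : (0 < N)%N -> ~~ (ell %| N)%N -> x ^+ N = 1 -> red x = 1 -> x = 1.
Proof.
move=> N0 nd xN rx; have Ox := rootO N0 xN.
apply/eqP; apply: contraR nd => x1.
have hs : \sum_(i < N) x ^+ i = 0.
  have := subrX1 x N; rewrite xN subrr => /esym/eqP.
  by rewrite mulf_eq0 subr_eq0 (negPf x1) => /eqP.
have := congr1 red hs; rewrite red0 red_sum => [|i]; last exact: O0_X.
under eq_bigr do rewrite redX // rx expr1n.
rewrite sumr_const card_ord => /eqP.
by rewrite (dvdn_pcharf ch1).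
Qed.

End Red.


Section Main.
Variables (L : fieldType) (vL : L -> int).
Hypothesis Hv : is_discrete_valuation vL.
Variables (h p ell Q : nat).
Hypotheses (h1 : (0 < h)%N) (pp : prime p) (pl : prime ell) (lp : ell != p)
  (pL : vpow vL 1 (p%:R : L)) (Q1 : (1 < Q)%N).
Variable g : L.
Hypotheses (Ug : vunit vL g)
  (gdiv : forall k, vpow vL 1 (g ^+ k - 1) -> (Q.-1 %| k)%N)
  (glog : forall x, vunit vL x -> exists k : 'I_Q.-1, vpow vL 1 (x - g ^+ k))
  (xQ : forall x, vunit vL x -> vpow vL 1 (x ^+ Q.-1 - 1)).
Variables (Lam0 : closedFieldType) (Lam1 : fieldType) (O0 : Lam0 -> bool)
  (red : Lam0 -> Lam1).
Hypotheses (Hred : reduction_map O0 red) (ch0 : [pchar Lam0] =i pred0)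
  (ch1 : ell \in [pchar Lam1]).

Local Notation U := (vunit vL).
Local Notation cg x y := (vpow vL 1 (x - y)).

Definition Nn := (Q.-1 * p ^ h.-1)%N.
Definition Np := (Nn`_ell^')%N.
Definition aa := logn ell Nn.
Definition mm := logn ell Q.-1.

Lemma Q1_gt0 : (0 < Q.-1)%N. Proof. lia. Qed.
Lemma Nn_gt0 : (0 < Nn)%N.
Proof. by rewrite /Nn muln_gt0 Q1_gt0 expn_gt0 prime_gt0. Qed.
Lemma Np_gt0 : (0 < Np)%N. Proof. exact: part_gt0. Qed.
Lemma Nn_split : Nn = (Np * ell ^ aa)%N.
Proof. by rewrite mulnC /Np /aa -p_part partnC // Nn_gt0. Qed.
Lemma Np_nd : ~~ (ell %| Np)%N.
Proof. by rewrite -p'natE // /Np part_pnat. Qed.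

Lemma unitN x : U x -> vpow vL h%:Z (x ^+ Nn - 1).
Proof.
move=> Ux; rewrite /Nn exprM.
by have := binom_iter Hv pp pL h.-1 (xQ Ux); rewrite prednK.
Qed.

Section Chars.
Variables (Lam : fieldType) (chi : L -> Lam).
Hypothesis Hc : Th_char vL h chi.

Lemma chiM x y : U x -> U y -> chi (x * y) = chi x * chi y.
Proof. by case: Hc => H _; apply: H. Qed.
Lemma chi_triv x : U x -> vpow vL h%:Z (x - 1) -> chi x = 1.
Proof. by case: Hc => _ H; apply: H. Qed.
Lemma chi1 : chi 1 = 1.
Proof. by apply: chi_triv; [exact: vunit1 Hv | rewrite subrr vpow0]. Qed.
Lemma chiX x k : U x -> chi (x ^+ k) = chi x ^+ k.
Proof.
move=> Ux; elim: k => [|k IH]; first by rewrite !expr0 chi1.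
by rewrite !exprS chiM ?IH // vunitX.
Qed.
Lemma chi_neq0 x : U x -> chi x != 0.
Proof.
move=> Ux; apply/eqP => c0.
have := chiM Ux (vunitV Hv Ux); rewrite mulfV ?(vunit_neq0 Ux) // chi1 c0 mul0r.
by move/eqP; rewrite oner_eq0.
Qed.
Lemma chiN x : U x -> chi x ^+ Nn = 1.
Proof.
by move=> Ux; rewrite -chiX //; apply: chi_triv; [exact: vunitX | exact: unitN].
Qed.
Lemma chiP x : U x -> cg x 1 -> chi x ^+ (p ^ h.-1) = 1.
Proof.
move=> Ux hx; rewrite -chiX //; apply: chi_triv; first exact: vunitX.
by have := binom_iter Hv pp pL h.-1 hx; rewrite prednK.
Qed.
End Chars.

Lemma psiNp (psi : L -> Lam1) x : Th_char vL h psi -> U x -> psi x ^+ Np = 1.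
Proof.
move=> Hp Ux; have := chiN Hp Ux; rewrite Nn_split exprM.
exact: frob_root1 ch1.
Qed.

Variables (z0 w : Lam0).
Hypotheses (pz0 : Np.-primitive_root z0) (pw : (ell ^ mm).-primitive_root w).

Definition z1 := red z0.

Lemma Oz0 : O0 z0.
Proof. apply: (rootO Hred Np_gt0); exact: prim_expr_order. Qed.

Lemma pz1 : Np.-primitive_root z1.
Proof.
have z1N : z1 ^+ Np = 1 by rewrite /z1 -(redX Hred) ?Oz0 // (prim_expr_order pz0) (red1 Hred).
have [d pd dd] := prim_order_exists Np_gt0 z1N.
suff -> : Np = d by [].
apply/eqP; rewrite eqn_dvd dd andbT (prim_order_dvd pz0); apply/eqP.
apply: (red_root1 Hred ch1 Np_gt0 Np_nd).
  by rewrite exprAC (prim_expr_order pz0) expr1n.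
by rewrite (redX Hred) ?Oz0 // prim_expr_order.
Qed.

Definition idx (y : Lam1) : nat := oapp val 0%N [pick i : 'I_Np | y == z1 ^+ i].
Lemma idx_spec y : y ^+ Np = 1 -> z1 ^+ idx y = y.
Proof.
move=> yN; rewrite /idx; case: pickP => [i /eqP -> //|none].
by case: (prim_rootP pz1 yN) => i e; have := none i; rewrite e eqxx.
Qed.

Definition liftr (y : Lam1) : Lam0 := z0 ^+ idx y.
Lemma lift_red y : y ^+ Np = 1 -> red (liftr y) = y.
Proof. by move=> yN; rewrite /liftr (redX Hred) ?Oz0 // idx_spec. Qed.
Lemma liftM y y' : y ^+ Np = 1 -> y' ^+ Np = 1 -> liftr (y * y') = liftr y * liftr y'.
Proof.
move=> yN y'N; rewrite /liftr -exprD; apply/eqP.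
rewrite (eq_prim_root_expr pz0) -(eq_prim_root_expr pz1) exprD !idx_spec //.
by rewrite exprMn yN y'N mulr1.
Qed.
Lemma lift1 : liftr 1 = 1.
Proof.
rewrite /liftr; apply/eqP; rewrite -(expr0 z0) (eq_prim_root_expr pz0).
by rewrite -(eq_prim_root_expr pz1) expr0 idx_spec // expr1n.
Qed.
Lemma liftN y : liftr y ^+ Np = 1.
Proof. by rewrite /liftr exprAC (prim_expr_order pz0) expr1n. Qed.
Lemma liftO y : O0 (liftr y).
Proof. apply: (rootO Hred Np_gt0); exact: liftN. Qed.

Lemma surj_part (psi : L -> Lam1) : Th_char vL h psi ->
  Th_char vL h (fun x => liftr (psi x)) /\
  (forall x, U x -> red (liftr (psi x)) = psi x).
Proof.
move=> Hp; split; last by move=> x Ux; rewrite lift_red // psiNp.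
split.
  move=> x y Ux Uy; rewrite (chiM Hp) // liftM //; exact: psiNp.
by move=> x Ux hx; rewrite (chi_triv Hp) // lift1.
Qed.


Lemma cgL_sym x y : cg x y -> cg y x.
Proof. by move/(vpowN Hv); rewrite opprB. Qed.
Lemma cgL_trans y x z : cg x y -> cg y z -> cg x z.
Proof. by move=> e1 e2; have := vpowD Hv e1 e2; rewrite addrA subrK. Qed.
Lemma cgM0 x x' y y' : vpow vL 0 x' -> vpow vL 0 y -> cg x x' -> cg y y' ->
  cg (x * y) (x' * y').
Proof.
move=> hx' hy e1 e2.
have e : x * y - x' * y' = (x - x') * y + x' * (y - y').
  by rewrite mulrBl mulrBr addrA subrK.
rewrite e; apply: (vpowD Hv).
  by have := vpowM Hv e1 hy; rewrite addr0.
by have := vpowM Hv hx' e2; rewrite add0r.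
Qed.

Definition dlog (x : L) : nat := oapp val 0%N [pick k : 'I_Q.-1 | cg x (g ^+ k)].
Lemma dlog_spec x : U x -> cg x (g ^+ dlog x).
Proof.
move=> Ux; rewrite /dlog; case: pickP => [k //|none].
by case: (glog Ux) => k hk; have := none k; rewrite hk.
Qed.

Lemma cg_g A B : cg (g ^+ A) (g ^+ B) -> A = B %[mod Q.-1].
Proof.
wlog AB : A B / (B <= A)%N.
  move=> H; case: (leqP B A) => [|/ltnW] hBA; first exact: H.
  by move=> hc; apply/esym/H => //; apply: cgL_sym.
move=> hc; apply/eqP; rewrite eqn_mod_dvd //; apply: gdiv.
have e : g ^+ A - g ^+ B = g ^+ B * (g ^+ (A - B) - 1).
  by rewrite mulrBr mulr1 -exprD subnKC.
by rewrite -(vpow_unitM Hv _ _ (vunitX Hv B Ug)) -e.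
Qed.

Lemma ellm_dvd : (ell ^ mm %| Q.-1)%N.
Proof. exact: pfactor_dvdnn. Qed.

Lemma w_mod A B : A = B %[mod Q.-1] -> w ^+ A = w ^+ B.
Proof.
move=> e; apply/eqP; rewrite (eq_prim_root_expr pw).
by rewrite -(modn_dvdm A ellm_dvd) -(modn_dvdm B ellm_dvd) e.
Qed.

Lemma Og k : vpow vL 0 (g ^+ k).
Proof. exact: vunitO (vunitX Hv k Ug). Qed.

Lemma dlogM x y : U x -> U y -> w ^+ dlog (x * y) = w ^+ dlog x * w ^+ dlog y.
Proof.
move=> Ux Uy; rewrite -exprD; apply: w_mod; apply: cg_g.
apply: (cgL_trans (y := x * y)); first by apply: cgL_sym; apply: dlog_spec; exact: vunitM.
rewrite exprD; apply: cgM0; [exact: Og | exact: vunitO | exact: dlog_spec..].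
Qed.

Lemma dlog_triv x : U x -> cg x 1 -> w ^+ dlog x = 1.
Proof.
move=> Ux hx; rewrite -(expr0 w); apply: w_mod; apply: cg_g.
apply: (cgL_trans (y := x)); first by apply: cgL_sym; apply: dlog_spec.
by rewrite expr0.
Qed.

Lemma dlog_g : w ^+ dlog g = w.
Proof.
rewrite -{2}(expr1 w); apply: w_mod; apply: cg_g; rewrite expr1.
by apply: cgL_sym; apply: dlog_spec.
Qed.

Lemma ellm_gt0 : (0 < ell ^ mm)%N. Proof. by rewrite expn_gt0 prime_gt0. Qed.

Lemma Ow : O0 w.
Proof. apply: (rootO Hred ellm_gt0); exact: prim_expr_order. Qed.

Lemma redw : red w = 1.
Proof.
apply: (frob_root1 (k := mm) ch1).
by rewrite -(redX Hred) ?Ow // (prim_expr_order pw) (red1 Hred).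
Qed.

Definition etaf (i : nat) (x : L) : Lam0 := (w ^+ dlog x) ^+ i.

Lemma etaO i x : O0 (etaf i x).
Proof. by apply: (O0_X Hred); apply: (O0_X Hred); exact: Ow. Qed.
Lemma eta_red i x : red (etaf i x) = 1.
Proof.
rewrite /etaf (redX Hred) ?(redX Hred) ?redw ?expr1n //; first exact: Ow.
by apply: (O0_X Hred); exact: Ow.
Qed.

Definition chis (psi : L -> Lam1) (i : nat) (x : L) : Lam0 := liftr (psi x) * etaf i x.

Lemma chis_char psi i : Th_char vL h psi -> Th_char vL h (chis psi i).
Proof.
move=> Hp; have [Hc _] := surj_part Hp; split.
  move=> x y Ux Uy; rewrite /chis /etaf (chiM Hc) // dlogM // exprMn.
  by rewrite mulrACA.
move=> x Ux hx; rewrite /chis /etaf (chi_triv Hc) // dlog_triv ?expr1n ?mulr1 //.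
by apply: (vpowW (b := h%:Z)) => //; lia.
Qed.

Lemma chis_red psi i x : Th_char vL h psi -> U x -> red (chis psi i x) = psi x.
Proof.
move=> Hp Ux; rewrite /chis (redM Hred) ?liftO ?etaO // eta_red mulr1.
by have [_ ->] := surj_part Hp.
Qed.

Lemma lift_neq0 y : liftr y != 0.
Proof.
apply/eqP => l0; have := liftN y; rewrite l0 expr0n.
by case: Np Np_gt0 => // n _ /eqP; rewrite eq_sym oner_eq0.
Qed.

Lemma chis_dist psi (i j : 'I_(ell ^ mm)) : i != j -> chis psi i g != chis psi j g.
Proof.
move=> ij; rewrite /chis /etaf dlog_g; apply: contra ij => /eqP e.
have := mulfI (lift_neq0 (psi g)) e => /eqP.
by rewrite (eq_prim_root_expr pw) !modn_small.
Qed.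

Lemma chis_complete psi chi : Th_char vL h psi -> Th_char vL h chi ->
  (forall x, U x -> red (chi x) = psi x) ->
  exists i : 'I_(ell ^ mm), forall x, U x -> chi x = chis psi i x.
Proof.
move=> Hp Hc Hr; have [Hc0 Hr0] := surj_part Hp.
pose c0 x := liftr (psi x).
pose e x := chi x / c0 x.
have c0n x : c0 x != 0 by apply: lift_neq0.
have chiE x : chi x = e x * c0 x by rewrite /e divfK.
have eN x : U x -> e x ^+ Nn = 1.
  by move=> Ux; rewrite /e expr_div_n (chiN Hc) // (chiN Hc0) // divr1.
have step1 x : U x -> e x ^+ (ell ^ aa) = 1.
  move=> Ux; have Oe : O0 (e x) by apply: (rootO Hred Nn_gt0); exact: eN.
  have re : red (e x) = 1.
    have := Hr x Ux; rewrite chiE (redM Hred) ?liftO // -/(c0 x) Hr0 //.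
    move/(congr1 (fun z => z / psi x)); rewrite mulfK ?divff ?(chi_neq0 Hp) //.
  apply: (red_root1 Hred ch1 Np_gt0 Np_nd).
    by rewrite -exprM mulnC -Nn_split eN.
  by rewrite (redX Hred) // re expr1n.
have eX x k : U x -> e (x ^+ k) = e x ^+ k.
  by move=> Ux; rewrite /e /c0 (chiX Hc) // (chiX Hc0) // expr_div_n.
have eM x y : U x -> U y -> e (x * y) = e x * e y.
  by move=> Ux Uy; rewrite /e /c0 (chiM Hc) // (chiM Hc0) // mulf_div.
have cop : coprime (ell ^ aa) (p ^ h.-1).
  apply: coprimeXl; apply: coprimeXr.
  by rewrite prime_coprime // dvdn_prime2.
have step3 x : U x -> cg x 1 -> e x = 1.
  move=> Ux hx; apply: (root_coprime cop); first by rewrite expn_gt0 prime_gt0.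
    exact: step1.
  by rewrite /e expr_div_n (chiP Hc) // (chiP Hc0) // divr1.
pose z := e g.
have z1 : z ^+ (ell ^ mm) = 1.
  have za : z ^+ (ell ^ aa) = 1 by apply: step1.
  have zQ : z ^+ Q.-1 = 1.
    by rewrite /z -eX // step3 //; first [exact: (vunitX Hv _ Ug) | exact: (xQ Ug)].
  have ea : (0 < ell ^ aa)%N by rewrite expn_gt0 prime_gt0.
  have [d pd dd] := prim_order_exists ea za.
  have dQ : (d %| Q.-1)%N by rewrite (prim_order_dvd pd) zQ.
  case/(dvdn_pfactor _ _ pl): dd => k _ dk.
  apply/eqP; rewrite -(prim_order_dvd pd) dk dvdn_exp2l //.
  by rewrite -(pfactor_dvdn _ pl Q1_gt0) -dk.
have [i zi] := prim_rootP pw z1.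
exists i => x Ux.
rewrite /chis /etaf.
set k := dlog x.
have Ugk : U (g ^+ k) := vunitX Hv k Ug.
pose u := x * (g ^+ k)^-1.
have Uu : U u := vunitM Hv Ux (vunitV Hv Ugk).
have hu : cg u 1.
  have eu : u - 1 = (g ^+ k)^-1 * (x - g ^+ k).
    by rewrite /u mulrBr mulVf ?(vunit_neq0 Ugk) // mulrC.
  by rewrite eu (vpow_unitM Hv _ _ (vunitV Hv Ugk)); apply: dlog_spec.
have xe : x = g ^+ k * u by rewrite /u mulrC divfK ?(vunit_neq0 Ugk).
have ex : e x = (w ^+ k) ^+ i.
  by rewrite xe eM // eX // (step3 u) // mulr1 -/z zi exprAC.
by rewrite chiE ex mulrC.
Qed.

Lemma main_parts :
  (forall psi : L -> Lam1, Th_char vL h psi ->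
     exists2 chi : L -> Lam0, Th_char vL h chi &
       forall x, vunit vL x -> red (chi x) = psi x) /\
  (forall psi : L -> Lam1, Th_char vL h psi ->
     exists chis : 'I_(ell ^ mm) -> L -> Lam0,
       [/\ forall i, Th_char vL h (chis i),
           forall i x, vunit vL x -> red (chis i x) = psi x,
           forall i j, i != j -> exists2 x, vunit vL x & chis i x != chis j x
         & forall chi : L -> Lam0, Th_char vL h chi ->
             (forall x, vunit vL x -> red (chi x) = psi x) ->
             exists i, forall x, vunit vL x -> chi x = chis i x]).
Proof.
split=> psi Hp.
  by have [Hc Hr] := surj_part Hp; exists (fun x => liftr (psi x)).
exists (fun i => chis psi i); split.
- by move=> i; apply: chis_char.
- by move=> i x Ux; apply: chis_red.
- by move=> i j ij; exists g => //; apply: chis_dist.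
- by move=> chi Hc Hr; apply: chis_complete.
Qed.

End Main.

Unset Implicit Arguments.
Set Strict Implicit.

Theorem lemma3p2 (K : fieldType) (L : fieldExtType K) (vL : L -> int)
    (p q n ell : nat) (Lam0 Lam1 : closedFieldType)
    (O0 : Lam0 -> bool) (red : Lam0 -> Lam1) :
  prime p -> prime ell -> ell != p ->
  \dim {:L} = n ->
  is_discrete_valuation vL ->
  is_discrete_valuation (fun c : K => vL c%:A) ->
  v_complete (fun c : K => vL c%:A) ->
  residue_card (fun c : K => vL c%:A) q ->
  vpow (fun c : K => vL c%:A) 1 p%:R ->
  residue_card vL (q ^ n) ->
  [pchar Lam0] =i pred0 -> ell \in [pchar Lam1] ->
  reduction_map O0 red ->
  forall h : nat, (1 <= h)%N ->
  let m := logn ell (q ^ n - 1) in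
  (forall chi : L -> Lam0, Th_char vL h chi ->
     forall s : L -> L, gal_elt s ->
       (fun x => red ((chi \o s) x)) = (red \o chi) \o s) /\
  (forall psi : L -> Lam1, Th_char vL h psi ->
     exists2 chi : L -> Lam0, Th_char vL h chi &
       forall x, vunit vL x -> red (chi x) = psi x) /\
  (forall psi : L -> Lam1, Th_char vL h psi ->
     exists chis : 'I_(ell ^ m) -> L -> Lam0,
       [/\ forall i, Th_char vL h (chis i),
           forall i x, vunit vL x -> red (chis i x) = psi x,
           forall i j, i != j -> exists2 x, vunit vL x & chis i x != chis j x
         & forall chi : L -> Lam0, Th_char vL h chi ->
             (forall x, vunit vL x -> red (chi x) = psi x) ->
             exists i, forall x, vunit vL x -> chi x = chis i x]).
Proof.
move=> pp pl lp _ Hv _ _ _ pK HresL ch0 ch1 Hred h h1 m.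
split; first by [].
have pL : vpow vL 1 (p%:R : L).
  have e : ((p%:R : K)%:A : L) = p%:R by rewrite scaler_nat.
  case/orP: pK => [/eqP h0 | hv]; rewrite /vpow.
    by rewrite -e h0 scale0r eqxx.
  by rewrite -e hv orbT.
case: HresL => s [Hsz Hall Hdist Hcov].
have [Q1 [xQ [g [Ug gQ gdiv glog]]]] := res_gen Hv Hsz Hall Hdist Hcov.
have Np0 : ((Np h p ell (q ^ n))%:R != 0 :> Lam0).
  by move/pcharf0P: ch0 => ->; rewrite -lt0n Np_gt0.
have [z0 pz0] := closed_prim_root (Np_gt0 h p ell (q ^ n)) Np0.
have ellm0 : (0 < ell ^ mm ell (q ^ n))%N by rewrite expn_gt0 prime_gt0.
have ellm0' : ((ell ^ mm ell (q ^ n))%:R != 0 :> Lam0).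
  by move/pcharf0P: ch0 => ->; rewrite -lt0n.
have [w pw] := closed_prim_root ellm0 ellm0'.
have -> : m = mm ell (q ^ n) by rewrite /m /mm subn1.
exact: (main_parts Hv h1 pp pl lp pL Q1 Ug gdiv glog xQ Hred ch1 pz0 pw).
Qed.
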